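(* Let $(G,\cdot)$ be a loop with identity $e$ and let $(H,\cdot)$ be a non-trivial subloop of $G$ such that $(xs\cdot z)s=x(sz\cdot s)$ for all $x,z\in G$ and $s\in H$. Then $R_{s^n}=R_s^n$ for all $s\in H$ and $n\in\mathbb{Z}$; that is, $xs^n=(\cdots((xs)s)\cdots)s$ ($n$ factors $s$) for all $x\in G$, $s\in H$.
   Context: Juxtaposition binds more tightly than $\cdot$. $R_s:G\to G$ is the right translation $xR_s=x\cdot s$. For $s\in H$ the left and right inverses coincide; call it $s^{-1}$. Powers: $s^0=e$, $s^n=s^{n-1}\cdot s$ for $n>0$, $s^n=(s^{-1})^{|n|}$ for $n<0$; $R_s^n$ is the $n$-th power of the permutation $R_s$ in the symmetric group of $G$. *)

(* Defs.v *)
From Stdlib Require Import ZArith.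

(* A loop: a set with a binary operation, two-sided identity e, and unique
   solvability of a*x = b and y*a = b, encoded by the left division
   ldiv a b (= the unique x with a*x = b) and right division rdiv b a
   (= the unique y with y*a = b). *)
Record Loop := {
  carrier :> Type;
  mul : carrier -> carrier -> carrier;
  ldiv : carrier -> carrier -> carrier;
  rdiv : carrier -> carrier -> carrier;
  e : carrier;
  mul_e_l : forall x, mul e x = x;
  mul_e_r : forall x, mul x e = x;
  mul_ldiv : forall a b, mul a (ldiv a b) = b;
  ldiv_mul : forall a b, ldiv a (mul a b) = b;
  rdiv_mul : forall a b, mul (rdiv b a) a = b;
  mul_rdiv : forall a b, rdiv (mul b a) a = b
}.

Arguments mul {L} : rename.
Arguments ldiv {L} : rename.
Arguments rdiv {L} : rename.
Arguments e {L} : rename.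

Definition subloop (G : Loop) (H : G -> Prop) : Prop :=
  H e /\
  (forall x y, H x -> H y -> H (mul x y)) /\
  (forall x y, H x -> H y -> H (ldiv x y)) /\
  (forall x y, H x -> H y -> H (rdiv x y)).

Definition nontrivial (G : Loop) (H : G -> Prop) : Prop :=
  exists s, H s /\ s <> e.

Definition Rt {G : Loop} (s : G) (x : G) : G := mul x s.
Definition Rt_inv {G : Loop} (s : G) (x : G) : G := rdiv x s.

(* inverse of s: the right inverse s \ e (for s in H it coincides with
   the left inverse e / s) *)
Definition linv {G : Loop} (s : G) : G := ldiv s e.

Fixpoint npow {G : Loop} (s : G) (n : nat) : G :=
  match n with
  | O => e
  | S m => mul (npow s m) s
  end.

Definition zpow {G : Loop} (s : G) (n : Z) : G :=
  match n with
  | Z0 => e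
  | Zpos p => npow s (Pos.to_nat p)
  | Zneg p => npow (linv s) (Pos.to_nat p)
  end.

Definition Rpow {G : Loop} (s : G) (n : Z) (x : G) : G :=
  match n with
  | Z0 => x
  | Zpos p => Nat.iter (Pos.to_nat p) (Rt s) x
  | Zneg p => Nat.iter (Pos.to_nat p) (Rt_inv s) x
  end.

(* Main.v *)
Require Import Defs.
From Stdlib Require Import ZArith.

Lemma iter_shift {A} (f : A -> A) k x : Nat.iter k f (f x) = Nat.iter (S k) f x.
Proof. induction k; simpl; [reflexivity| now rewrite IHk]. Qed.

Section P.
Variables (G : Loop) (s : G).
Hypothesis Hid : forall (x z : G),
     mul (mul (mul x s) z) s = mul x (mul (mul s z) s).

Definition PP m := (forall x, mul x (npow s m) = Nat.iter m (Rt s) x) /\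
   mul s (npow s m) = mul (npow s m) s.

Lemma pos_aux : forall m, PP m /\ PP (S m).
Proof.
  induction m as [|m [[A0 C0] [A1 C1]]].
  - unfold PP; simpl; repeat split; intros;
      rewrite ?mul_e_r, ?mul_e_l; reflexivity.
  - split; [split; assumption|].
    assert (A2 : forall x, mul x (npow s (S (S m))) = Nat.iter (S (S m)) (Rt s) x).
    { intro x. change (npow s (S (S m))) with (mul (mul (npow s m) s) s).
      rewrite <- C0, <- Hid, A0. change (mul x s) with (Rt s x). rewrite iter_shift. reflexivity. }
    split; [exact A2|].
    rewrite A2. change (Nat.iter (S (S m)) (Rt s) s) with (mul (Nat.iter (S m) (Rt s) s) s).
    rewrite <- A1, C1. reflexivity.
Qed.
End P.

Theorem corollary3p1 (G : Loop) (H : G -> Prop)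
  (HH : subloop G H) (Hnt : nontrivial G H)
  (Hid : forall (x z s : G), H s ->
     mul (mul (mul x s) z) s = mul x (mul (mul s z) s)) :
  forall (s : G), H s -> forall (n : Z) (x : G),
    mul x (zpow s n) = Rpow s n x.
Proof.
  intros s Hs n x. destruct HH as [He [Hm [Hl Hr]]].
  destruct n as [|p|p]; simpl.
  - apply mul_e_r.
  - exact (proj1 (proj1 (pos_aux G s (fun x z => Hid x z s Hs) _)) x).
  - assert (Ht : H (linv s)) by (apply Hl; auto).
    rewrite (proj1 (proj1 (pos_aux G (linv s) (fun x z => Hid x z _ Ht) _)) x).
    assert (E : forall y, Rt (linv s) y = Rt_inv s y).
    { intro y. unfold Rt, Rt_inv.
      assert (K : mul (mul y (linv s)) s = y).
      { pose proof (Hid (rdiv y s) (linv s) s Hs) as Q.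
        unfold linv in *. rewrite mul_ldiv, mul_e_l, rdiv_mul in Q. exact Q. }
      rewrite <- K at 2. rewrite mul_rdiv. reflexivity. }
    generalize (Pos.to_nat p). intro k. induction k; simpl; [reflexivity|].
    rewrite IHk, E. reflexivity.
Qed.
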